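(* Let $\mathbf{C}\in\mathbb{R}^{n\times n}$, let $\mathbf{X}=\mathbf{C}^\top\mathbf{C}$, and let $\Pi$ be any participation schema. For $\pi\in\Pi$, let $\mathbf{P}_\pi$ be the diagonal $0/1$ matrix with $\mathbf{P}_\pi[i,i]=1$ if and only if $i\in\pi$. Then the squared sensitivity satisfies $$\mathrm{sens}_\Pi(\mathbf{C})^2=\max_{\pi\in\Pi}\ \sup_{\mathbf{u}\in\mathfrak{D}}\ \mathrm{tr}\big([\mathbf{P}_\pi\mathbf{C}^\top\mathbf{C}\mathbf{P}_\pi][\mathbf{u}\mathbf{u}^\top]\big).$$ Moreover, since every $\mathbf{u}\in\mathfrak{D}$ has rows of $\ell_2$ norm at most $1$, $$\mathrm{sens}_\Pi(\mathbf{C})^2\le\max_{\pi\in\Pi}\sum_{i,j\in\pi}|\mathbf{X}_{[i,j]}|.$$ This upper bound holds with equality whenever $\mathbf{P}_\pi\mathbf{C}^\top\mathbf{C}\mathbf{P}_\pi$ is entrywise nonnegative for all $\pi\in\Pi$. These statements hold independently of the row dimension $d$.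
   Context: A participation schema $\Pi$ is a set of subsets $\pi\subseteq[n]=\{1,\dots,n\}$ (the sets of steps in which one example may participate). $\mathfrak{D}$ is the set of all $\mathbf{u}\in\mathbb{R}^{n\times d}$ whose rows have $\ell_2$ norm at most $1$ and whose nonzero-row indices are contained in some $\pi\in\Pi$. The sensitivity of $\mathbf{C}$ is $\mathrm{sens}_\Pi(\mathbf{C})=\sup_{\mathbf{u}\in\mathfrak{D}}\|\mathbf{C}\mathbf{u}\|_F$. *)

(* Defs.v *)
From HB Require Import structures.
From mathcomp Require Import all_boot all_order all_algebra.
From mathcomp Require Import classical_sets reals.
Set Implicit Arguments. Unset Strict Implicit. Unset Printing Implicit Defensive.
Import Order.TTheory GRing.Theory Num.Theory.
Local Open Scope ring_scope.
Local Open Scope classical_set_scope.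

Section Sensitivity.
Variable R : realType.


Definition l2norm (m : nat) (v : 'rV[R]_m) : R :=
  Num.sqrt (\sum_(j < m) v 0 j ^+ 2).

Definition frob (p q : nat) (A : 'M[R]_(p, q)) : R :=
  Num.sqrt (\sum_(i < p) \sum_(j < q) A i j ^+ 2).

Definition frakD (n d : nat) (Pi : {set {set 'I_n}}) : set 'M[R]_(n, d) :=
  [set u | (forall i : 'I_n, l2norm (row i u) <= 1) /\
           (exists2 pi, pi \in Pi & forall i : 'I_n, row i u != 0 -> i \in pi)].

Definition sens (n d : nat) (Pi : {set {set 'I_n}}) (C : 'M[R]_n) : R :=
  sup [set x | exists2 u, @frakD n d Pi u & x = frob (C *m u)].

Definition Pmx (n : nat) (pi : {set 'I_n}) : 'M[R]_n :=
  diag_mx (\row_(i < n) (i \in pi)%:R).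

End Sensitivity.
Arguments frakD {R} n d Pi.
Arguments sens {R} n d Pi C.
Arguments Pmx {R} n pi.

(* Main.v *)
Require Import Defs.
From HB Require Import structures.
From mathcomp Require Import all_boot all_order all_algebra.
From mathcomp Require Import classical_sets reals.
From mathcomp Require Import lra.
Import Order.TTheory GRing.Theory Num.Theory.
Local Open Scope ring_scope.
Local Open Scope classical_set_scope.

Section Aux.
Variable R : realType.
Set Implicit Arguments. Unset Strict Implicit.

Lemma sq_le_sqrt (x m : R) : 0 <= x -> x ^+ 2 <= m -> x <= Num.sqrt m.
Proof.
move=> x0 h; have m0 : 0 <= m by apply: le_trans h; exact: sqr_ge0.
by rewrite -(ger0_norm x0) -sqrtr_sqr ler_sqrt.
Qed.

Lemma le_sqrt_sq (x m : R) : 0 <= m -> 0 <= x -> x <= Num.sqrt m -> x ^+ 2 <= m.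
Proof.
move=> m0 x0 h; rewrite -(sqr_sqrtr m0) !expr2.
by apply: ler_pM.
Qed.

Lemma le_sq (x y : R) : 0 <= x -> x <= y -> x ^+ 2 <= y ^+ 2.
Proof. move=> x0 h; rewrite !expr2; apply: ler_pM => //. Qed.

Lemma frob_ge0 p q (A : 'M[R]_(p, q)) : 0 <= frob A.
Proof. exact: sqrtr_ge0. Qed.

Lemma frob2 p q (A : 'M[R]_(p, q)) : frob A ^+ 2 = \tr (A *m A^T).
Proof.
rewrite /frob sqr_sqrtr; last by apply: sumr_ge0 => i _; apply: sumr_ge0 => j _; exact: sqr_ge0.
rewrite /mxtrace; apply: eq_bigr => i _; rewrite !mxE; apply: eq_bigr => j _.
by rewrite mxE expr2.
Qed.


Lemma two_absM (x y : R) : 2 * `|x * y| <= x ^+ 2 + y ^+ 2.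
Proof.
rewrite normrM; have := sqr_ge0 (`|x| - `|y|).
rewrite sqrrB !real_normK ?num_real //; lra.
Qed.

Lemma guu n d (u : 'M[R]_(n, d)) a b :
  (u *m u^T) a b = \sum_k u a k * u b k.
Proof. by rewrite mxE; apply: eq_bigr => k _; rewrite mxE. Qed.

Lemma rowPu n d (pi : {set 'I_n}) (u : 'M[R]_(n, d)) i :
  row i (Pmx n pi *m u) = if i \in pi then row i u else 0.
Proof.
apply/rowP => j; rewrite mul_diag_mx !mxE.
by case: (i \in pi); rewrite /= ?mul1r ?mul0r // !mxE.
Qed.

Lemma l2norm0 m : l2norm (0 : 'rV[R]_m) = 0.
Proof. by rewrite /l2norm big1 ?sqrtr0 // => j _; rewrite mxE expr0n. Qed.

Lemma frakD_P n d Pi (pi : {set 'I_n}) (u : 'M[R]_(n, d)) :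
  frakD n d Pi u -> frakD n d Pi (Pmx n pi *m u).
Proof.
move=> [hr [pi' hpi' hs]]; split.
  by move=> i; rewrite rowPu; case: (i \in pi) => //; rewrite l2norm0 ler01.
exists pi' => // i; rewrite rowPu; case: (i \in pi); first exact: hs.
by rewrite eqxx.
Qed.

Lemma row0_of n d (pi : {set 'I_n}) (u : 'M[R]_(n, d)) i :
  (forall i, row i u != 0 -> i \in pi) -> i \notin pi -> row i u = 0.
Proof.
move=> hs ni; case E: (row i u == 0); first by move/eqP: E.
by have := hs i; rewrite E => /(_ isT); rewrite (negbTE ni).
Qed.

Lemma entry0_of n d (pi : {set 'I_n}) (u : 'M[R]_(n, d)) i k :
  (forall i, row i u != 0 -> i \in pi) -> i \notin pi -> u i k = 0.
Proof.
move=> hs ni; have := congr1 (fun M : 'rV_d => M 0 k) (row0_of hs ni).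
by rewrite !mxE.
Qed.

Lemma Pu_id n d (pi : {set 'I_n}) (u : 'M[R]_(n, d)) :
  (forall i, row i u != 0 -> i \in pi) -> Pmx n pi *m u = u.
Proof.
move=> hs; apply/row_matrixP => i; rewrite rowPu.
case: ifP => // /negbT ni; by rewrite (row0_of hs ni).
Qed.

Lemma trPXP n d (pi : {set 'I_n}) (C : 'M[R]_n) (u : 'M[R]_(n, d)) :
  \tr ((Pmx n pi *m C^T *m C *m Pmx n pi) *m (u *m u^T)) =
  frob (C *m (Pmx n pi *m u)) ^+ 2.
Proof.
rewrite frob2 !trmx_mul /Pmx tr_diag_mx !mulmxA.
rewrite [RHS]mxtrace_mulC !mulmxA [RHS]mxtrace_mulC !mulmxA.
done.
Qed.

Lemma frob_tr n d (C : 'M[R]_n) (u : 'M[R]_(n, d)) :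
  frob (C *m u) ^+ 2 = \sum_a \sum_b (C^T *m C) a b * (u *m u^T) b a.
Proof.
rewrite frob2 trmx_mul !mulmxA mxtrace_mulC !mulmxA /mxtrace.
apply: eq_bigr => a _; rewrite -mulmxA mxE; done.
Qed.


Lemma rowsq n d (u : 'M[R]_(n, d)) i :
  l2norm (row i u) <= 1 -> \sum_k u i k ^+ 2 <= 1.
Proof.
move=> h; move: h; rewrite /l2norm -[X in _ <= X]sqrtr1 ler_sqrt // => h.
suff -> : \sum_k u i k ^+ 2 = \sum_k (row i u) 0 k ^+ 2 by [].
by apply: eq_bigr => k _; rewrite mxE.
Qed.

Lemma gbound n d (u : 'M[R]_(n, d)) a b :
  (forall i, l2norm (row i u) <= 1) -> `|(u *m u^T) a b| <= 1.
Proof.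
move=> hr; rewrite guu.
have h k : 2 * `|u a k * u b k| <= u a k ^+ 2 + u b k ^+ 2 := two_absM _ _.
have hs := @ler_sum _ _ (index_enum 'I_d) xpredT _ _ (fun k _ => h k).
rewrite -mulr_sumr big_split /= in hs.
have hn : `|\sum_k u a k * u b k| <= \sum_k `|u a k * u b k| := ler_norm_sum _ _ _.
have := rowsq (hr a); have := rowsq (hr b).
move=> *; lra.
Qed.

Lemma bound2 n d (pi : {set 'I_n}) (C : 'M[R]_n) (u : 'M[R]_(n, d)) :
  (forall i, l2norm (row i u) <= 1) -> (forall i, row i u != 0 -> i \in pi) ->
  frob (C *m u) ^+ 2 <= \sum_(a in pi) \sum_(b in pi) `|(C^T *m C) a b|.
Proof.
move=> hr hs; rewrite frob_tr [leRHS]big_mkcond /=; apply: ler_sum => a _.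
case: ifP => ha; last first.
  rewrite big1 // => b _; rewrite guu big1 ?mulr0 // => k _.
  by rewrite (entry0_of k hs (negbT ha)) mulr0.
rewrite [leRHS]big_mkcond /=; apply: ler_sum => b _.
case: ifP => hb; last first.
  rewrite guu big1 ?mulr0 // => k _.
  by rewrite (entry0_of k hs (negbT hb)) mul0r.
apply: le_trans (ler_norm _) _; rewrite normrM.
rewrite -[X in _ <= X]mulr1; apply: ler_wpM2l => //; exact: gbound.
Qed.


Lemma PXP_entry n (pi : {set 'I_n}) (C : 'M[R]_n) a b :
  (Pmx n pi *m C^T *m C *m Pmx n pi) a b =
  (a \in pi)%:R * (C^T *m C) a b * (b \in pi)%:R.
Proof.
by rewrite -(mulmxA (Pmx n pi)) /Pmx mul_mx_diag mxE mul_diag_mx !mxE.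
Qed.

Definition u0 n d (k0 : 'I_d) (pi : {set 'I_n}) : 'M[R]_(n, d) :=
  \matrix_(i, k) ((i \in pi) && (k == k0))%:R.

Lemma gu0 n d (k0 : 'I_d) (pi : {set 'I_n}) a b :
  (u0 k0 pi *m (u0 k0 pi)^T) a b = ((a \in pi) && (b \in pi))%:R.
Proof.
rewrite guu (bigD1 k0) //= big1 => [|k nk]; last by rewrite !mxE (negbTE nk) !andbF mul0r.
rewrite !mxE eqxx !andbT addr0; by case: (a \in pi); case: (b \in pi); rewrite /= ?mulr1 ?mulr0 ?mul0r.
Qed.

Lemma u0_D n d (k0 : 'I_d) (Pi : {set {set 'I_n}}) pi :
  pi \in Pi -> frakD n d Pi (u0 k0 pi).
Proof.
move=> hpi; split; last first.
  exists pi => // i; apply: contraR => ni; apply/eqP/rowP => k.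
  by rewrite !mxE (negbTE ni).
move=> i; rewrite /l2norm -sqrtr1 ler_sqrt // (bigD1 k0) //= big1 => [|k nk].
  by rewrite !mxE eqxx andbT addr0; case: (i \in pi); rewrite /= ?expr1n ?expr0n ?ler01.
by rewrite !mxE (negbTE nk) andbF expr0n.
Qed.

Lemma u0_val n d (k0 : 'I_d) (pi : {set 'I_n}) (C : 'M[R]_n) :
  (forall a b, 0 <= (Pmx n pi *m C^T *m C *m Pmx n pi) a b) ->
  frob (C *m u0 k0 pi) ^+ 2 = \sum_(a in pi) \sum_(b in pi) `|(C^T *m C) a b|.
Proof.
move=> hnn; rewrite frob_tr [RHS]big_mkcond /=; apply: eq_bigr => a _.
case: ifP => ha; last first.
  by rewrite big1 // => b _; rewrite gu0 ha andbF mulr0.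
rewrite [RHS]big_mkcond /=; apply: eq_bigr => b _; rewrite gu0.
case: ifP => hb; rewrite /= ?mulr0 //.
have := hnn a b; rewrite PXP_entry ha hb /= mulr1 mul1r => h.
by rewrite mulr1 ger0_norm.
Qed.

End Aux.
Theorem proposition3 (R : realType) (n : nat) (C : 'M[R]_n)
    (Pi : {set {set 'I_n}}) :
  Pi != finset.set0 ->
  let X := C^T *m C in
  forall d : nat,
    [/\ sens n d Pi C ^+ 2 =
          \big[Num.max/0]_(pi in Pi)
             sup [set x | exists2 u : 'M[R]_(n, d), frakD n d Pi u &
                    x = \tr ((Pmx n pi *m C^T *m C *m Pmx n pi) *m (u *m u^T))],
        sens n d Pi C ^+ 2 <=
          \big[Num.max/0]_(pi in Pi) \sum_(i in pi) \sum_(j in pi) `|X i j|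
      & (0 < d)%N ->
        (forall pi, pi \in Pi -> forall i j : 'I_n,
           0 <= (Pmx n pi *m C^T *m C *m Pmx n pi) i j) ->
        sens n d Pi C ^+ 2 =
          \big[Num.max/0]_(pi in Pi) \sum_(i in pi) \sum_(j in pi) `|X i j|].
Proof.
move=> Pi0 X d.
have [pi0 hpi0] : exists pi0, pi0 \in Pi.
  by case/set0Pn: Pi0 => x hx; exists x.
set S := [set x | exists2 u : 'M[R]_(n, d), frakD n d Pi u & x = frob (C *m u)].
set B := \big[Num.max/0]_(pi in Pi) \sum_(i in pi) \sum_(j in pi) `|X i j|.
have D0 : frakD n d Pi (0 : 'M[R]_(n, d)).
  split; first by move=> i; rewrite row0 l2norm0 ler01.
  by exists pi0 => // i; rewrite row0 eqxx.
have bnd : forall u, frakD n d Pi u -> frob (C *m u) ^+ 2 <= B.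
  move=> u [hr [pi hpi hs]]; apply: le_trans (bound2 C hr hs) _.
  rewrite /B /X. exact: (@le_bigmax_cond _ R _ _ _ (mem Pi) (fun pi => \sum_(i in pi) \sum_(j in pi) `|(C^T *m C) i j|) hpi).
have Sne : S !=set0 by exists (frob (C *m (0 : 'M[R]_(n, d)))); exists 0.
have Sub : has_ubound S.
  exists (Num.sqrt B) => _ [u hu ->]; apply: sq_le_sqrt; [exact: frob_ge0 | exact: bnd].
have ub : forall u, frakD n d Pi u -> frob (C *m u) <= sens n d Pi C.
  by move=> u hu; apply: ub_le_sup => //; exists u.
have s0 : 0 <= sens n d Pi C by apply: le_trans (ub _ D0); exact: frob_ge0.
have key1 : forall u, frakD n d Pi u -> frob (C *m u) ^+ 2 <= sens n d Pi C ^+ 2.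
  by move=> u hu; apply: le_sq; [exact: frob_ge0 | exact: ub].
have key2 : forall m, (forall u, frakD n d Pi u -> frob (C *m u) ^+ 2 <= m) ->
    sens n d Pi C ^+ 2 <= m.
  move=> m hm; have m0 : 0 <= m by apply: le_trans (hm _ D0); exact: sqr_ge0.
  apply: le_sqrt_sq => //; apply: ge_sup => // _ [u hu ->].
  by apply: sq_le_sqrt; [exact: frob_ge0 | exact: hm].
split.
- set T := fun pi : {set 'I_n} => [set x | exists2 u : 'M[R]_(n, d), frakD n d Pi u &
        x = \tr ((Pmx n pi *m C^T *m C *m Pmx n pi) *m (u *m u^T))].
  have Tne : forall pi, T pi !=set0.
    by move=> pi; exists (\tr ((Pmx n pi *m C^T *m C *m Pmx n pi) *m ((0 : 'M[R]_(n, d)) *m 0^T))); exists 0.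
  have Tub : forall pi, ubound (T pi) (sens n d Pi C ^+ 2).
    by move=> pi _ [u hu ->]; rewrite trPXP; apply: key1; exact: frakD_P.
  apply/eqP; rewrite eq_le; apply/andP; split.
    apply: key2 => u hu; case: (hu) => _ [pi hpi hs].
    apply: le_trans (_ : sup (T pi) <= _); last first.
      exact: (le_bigmax_cond _ (fun pi => sup (T pi)) hpi).
    apply: ub_le_sup; first by exists (sens n d Pi C ^+ 2); exact: Tub.
    by exists u => //; rewrite trPXP Pu_id.
  apply: bigmax_le; first exact: sqr_ge0.
  by move=> pi _; apply: ge_sup; [exact: Tne | exact: Tub].
- exact: key2.
- move=> d0 hnn; apply/eqP; rewrite eq_le; apply/andP; split; first exact: key2.
  apply: bigmax_le; first exact: sqr_ge0.
  move=> pi hpi; rewrite -(u0_val (Ordinal d0) (hnn pi hpi)).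
  apply: key1; exact: u0_D.
Qed.
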